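(* Let $\mathfrak p=(p_1,p_2,p_3,p_4)$ be a quadruple of distinct points in $\partial\mathbf H^2_{\mathbb C}$, and let $$\mathbb X_1=\mathbb X(p_1,p_2,p_3,p_4),\qquad \mathbb X_2=\mathbb X(p_1,p_3,p_2,p_4),\qquad \mathbb X_3=\mathbb X(p_2,p_3,p_1,p_4)$$ be its Korányi–Reimann complex cross-ratios. Then $$|\mathbb X_1|^{1/2}+|\mathbb X_2|^{1/2}\ge 1\qquad\text{and}\qquad -1\le |\mathbb X_1|^{1/2}-|\mathbb X_2|^{1/2}\le 1.$$ Moreover, equality holds in one of these three inequalities if and only if all four points of $\mathfrak p$ lie on a common $\mathbb R$-circle. In that case $\mathbb X_1>0$ and $\mathbb X_2>0$ (positive reals), and, writing $\mathbb X_i^{1/2}$ for the positive square root: (1) $\mathbb X_1^{1/2}-\mathbb X_2^{1/2}=1$ if $p_1$ and $p_3$ separate $p_2$ and $p_4$ on that $\mathbb R$-circle; (2) $\mathbb X_2^{1/2}-\mathbb X_1^{1/2}=1$ if $p_1$ and $p_2$ separate $p_3$ and $p_4$; (3) $\mathbb X_1^{1/2}+\mathbb X_2^{1/2}=1$ if $p_1$ and $p_4$ separate $p_2$ and $p_3$.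
   Context: Let $\mathbb C^{2,1}$ denote $\mathbb C^3$ with the Hermitian form of signature $(2,1)$: $\langle \mathbf z,\mathbf w\rangle=z_1\overline{w_3}+z_2\overline{w_2}+z_3\overline{w_1}$. Let $V_0=\{\mathbf z\in\mathbb C^{2,1}\setminus\{0\}:\langle\mathbf z,\mathbf z\rangle=0\}$ and $V_-=\{\mathbf z:\langle\mathbf z,\mathbf z\rangle<0\}$, and let $\mathbb P:\mathbb C^{2,1}\setminus\{0\}\to\mathbb CP^2$ be the projectivization. Complex hyperbolic space is $\mathbf H^2_{\mathbb C}=\mathbb P(V_-)$ and its boundary is $\partial\mathbf H^2_{\mathbb C}=\mathbb P(V_0)$ (a 3-sphere). A lift of $p\in\partial\mathbf H^2_{\mathbb C}$ is any $\mathbf p\in V_0$ with $\mathbb P(\mathbf p)=p$. For distinct $p_1,\dots,p_4\in\partial\mathbf H^2_{\mathbb C}$ with lifts $\mathbf p_i$, the Korányi–Reimann complex cross-ratio is $$\mathbb X(p_1,p_2,p_3,p_4)=\frac{\langle\mathbf p_3,\mathbf p_1\rangle\langle\mathbf p_4,\mathbf p_2\rangle}{\langle\mathbf p_4,\mathbf p_1\rangle\langle\mathbf p_3,\mathbf p_2\rangle},$$ which is independent of the choice of lifts (distinct boundary points have nonzero pairing). The holomorphic isometry group of $\mathbf H^2_{\mathbb C}$ is $\mathrm{PU}(2,1)$, the projectivized group of linear maps preserving $\langle\cdot,\cdot\rangle$. An $\mathbb R$-circle is the boundary in $\partial\mathbf H^2_{\mathbb C}$ of a Lagrangian plane (an isometric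 image of real hyperbolic plane $\mathbf H^2_{\mathbb R}$ in $\mathbf H^2_{\mathbb C}$); equivalently, it is an image under $\mathrm{PU}(2,1)$ of the standard $\mathbb R$-circle $\mathbb P(V_0\cap\mathbb R^3)$. An $\mathbb R$-circle is a topological circle; for four distinct points on it, ''$p_a$ and $p_b$ separate $p_c$ and $p_d$'' means $p_c$ and $p_d$ lie in different components of the circle with $p_a,p_b$ removed. *)

(* Defs.v *)
From mathcomp Require Import all_boot all_order all_algebra.
From mathcomp Require Import complex.
From mathcomp Require Import all_classical all_reals all_analysis.
Import GRing.Theory Num.Theory numFieldNormedType.Exports.

Set Implicit Arguments.
Unset Strict Implicit.
Unset Printing Implicit Defensive.

Local Open Scope ring_scope.
Local Open Scope classical_set_scope.

Section ComplexHyperbolic.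
Variable R : realType.

(* vectors of C^{2,1} as column vectors; coordinates z_1,z_2,z_3 are z 0 0, z 1 0, z 2 0 *)
Definition hform (z w : 'cV[R[i]]_3) : R[i] :=
  z 0 0 * (w 2%:R 0)^* + z 1%:R 0 * (w 1%:R 0)^* + z 2%:R 0 * (w 0 0)^*.

(* z is a lift of a boundary point: z in V_0 (nonzero null vector) *)
Definition boundary_lift (z : 'cV[R[i]]_3) : Prop :=
  z != 0 /\ hform z z = 0.

Definition same_point (z w : 'cV[R[i]]_3) : Prop :=
  exists l : R[i], z = l *: w.

Definition KRX (p1 p2 p3 p4 : 'cV[R[i]]_3) : R[i] :=
  (hform p3 p1 * hform p4 p2) / (hform p4 p1 * hform p3 p2).

Definition isU21 (g : 'M[R[i]]_3) : Prop :=
  forall z w : 'cV[R[i]]_3, hform (g *m z) (g *m w) = hform z w.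

Definition rC (x : R) : R[i] := Complex x 0.

(* z is a lift (in V_0 cap R^3) of a point of the standard R-circle P(V_0 cap R^3) *)
Definition std_Rcircle_lift (z : 'cV[R[i]]_3) : Prop :=
  (exists x : 'cV[R]_3, z = map_mx rC x) /\ boundary_lift z.

Definition on_common_Rcircle (p1 p2 p3 p4 : 'cV[R[i]]_3) : Prop :=
  exists g : 'M[R[i]]_3, isU21 g /\
    forall p, p \in [:: p1; p2; p3; p4] ->
      exists x, std_Rcircle_lift x /\ same_point p (g *m x).

Definition S1 : set (R * R) := [set s | s.1 ^+ 2 + s.2 ^+ 2 = 1].

(* homeomorphic parametrisation S^1 -> standard R-circle:
   (u,v) |-> P(1+u, v, -(1-u)/2)   (a real null vector, nonzero on S^1) *)
Definition std_param (s : R * R) : 'cV[R[i]]_3 :=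
  map_mx rC (\col_(i < 3) [:: 1 + s.1; s.2; - (1 - s.1) / 2]`_i).

Definition separates (a b c d : R * R) : Prop :=
  ~ connected_component (S1 `\` [set a; b]) c d.

End ComplexHyperbolic.

(* Main.v *)
Require Import Defs.
From mathcomp Require Import all_boot all_order all_algebra.
From mathcomp Require Import complex.
From mathcomp Require Import all_classical all_reals all_analysis.
Import GRing.Theory Num.Theory numFieldNormedType.Exports.
Local Open Scope ring_scope.

From mathcomp Require Import ring lra.
Import Order.TTheory.
Set Implicit Arguments. Unset Strict Implicit. Unset Printing Implicit Defensive.


Section S1.
Variable R : realType.
Local Notation C := (R[i]).

Lemma rCE (x : R) : rC x = real_complex R x. Proof. by []. Qed.
Lemma rCD (x y : R) : rC (x + y) = rC x + rC y. Proof. by rewrite !rCE rmorphD. Qed.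
Lemma rCN (x : R) : rC (- x) = - rC x. Proof. by rewrite !rCE rmorphN. Qed.
Lemma rCB (x y : R) : rC (x - y) = rC x - rC y. Proof. by rewrite !rCE rmorphB. Qed.
Lemma rCM (x y : R) : rC (x * y) = rC x * rC y. Proof. by rewrite !rCE rmorphM. Qed.
Lemma rCV (x : R) : rC (x^-1) = (rC x)^-1. Proof. by rewrite !rCE fmorphV. Qed.
Lemma rCX (x : R) n : rC (x ^+ n) = rC x ^+ n. Proof. by rewrite !rCE rmorphXn. Qed.
Lemma rC0 : rC 0 = 0 :> R[i]. Proof. by rewrite rCE rmorph0. Qed.
Lemma rC1 : rC 1 = 1 :> R[i]. Proof. by rewrite rCE rmorph1. Qed.
Lemma rCn n : rC n%:R = n%:R :> R[i]. Proof. by rewrite rCE rmorph_nat. Qed.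
Lemma rC_inj : injective (@rC R). Proof. by move=> x y [] . Qed.
Lemma rC_conj (x : R) : (rC x)^* = rC x. Proof. exact: conjc_real. Qed.
Lemma rC_le (x y : R) : (rC x <= rC y) = (x <= y). Proof. exact: lecR. Qed.
Lemma rC_lt (x y : R) : (rC x < rC y) = (x < y). Proof. exact: ltcR. Qed.
Lemma rC_real (z : C) : z^* = z -> z = rC (complex.Re z).
Proof. case: z => a b /eqP; rewrite eq_complex /= => /andP[_ /eqP H].
by apply/eqP; rewrite eq_complex /= eqxx /=; apply/eqP; lra. Qed.

Definition N (z : C) : R := complex.Re `|z|.
Lemma normE (z : C) : `|z| = rC (N z).
Proof. by rewrite /N normc_def. Qed.
Lemma N_ge0 (z : C) : 0 <= N z.
Proof. by rewrite -rC_le -normE rC0. Qed.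
Lemma NM (z : C) w : N (z * w) = N z * N w.
Proof. by apply: rC_inj; rewrite rCM -!normE normrM. Qed.
Lemma NV (z : C) : N (z^-1) = (N z)^-1.
Proof. by apply: rC_inj; rewrite rCV -!normE normfV. Qed.
Lemma Nconj (z : C) : N (z^*) = N z.
Proof. by rewrite /N normcJ. Qed.
Lemma N2 (z : C) : N z ^+ 2 = complex.Re z ^+ 2 + complex.Im z ^+ 2.
Proof. by apply: rC_inj; rewrite rCX -normE -add_Re2_Im2. Qed.
Lemma Re_le_N (z : C) : complex.Re z <= N z.
Proof. have := N2 z; have := N_ge0 z; nra. Qed.
Lemma Re_eq_N (z : C) : complex.Re z = N z -> z = rC (N z).
Proof. move=> E; have H := N2 z; rewrite -E in H *.
have Hb : complex.Im z = 0 by nra.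
by case: z E H Hb => a b /= E H ->. Qed.
Lemma N_eq0 (z : C) : (N z == 0) = (z == 0).
Proof. by rewrite -[z == 0]normr_eq0 normE -rC0 (inj_eq rC_inj). Qed.
Lemma mulconj (z : C) : z * z^* = rC (N z ^+ 2).
Proof. by rewrite -sqr_normc normE rCX. Qed.
Lemma addconj (z : C) : z + z^* = rC (2 * complex.Re z).
Proof. by rewrite addcJ rCM rCn. Qed.
Lemma sqrtC_rC (x : R) : 0 <= x -> sqrtC (rC x) = rC (Num.sqrt x).
Proof. move=> x0; apply/eqP; rewrite -(eqrXn2 (_ : 0 < 2)%N) ?sqrtC_ge0 ?rC_le ?sqrtr_ge0 //.
by rewrite sqrtCK -rCX sqr_sqrtr. Qed.
Lemma norm_rC (x : R) : `|rC x| = rC `|x|.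
Proof. by rewrite normE; congr rC; rewrite /N normc_def /= expr0n /= addr0 sqrtr_sqr. Qed.
End S1.


Section S2.
Variable R : realType.
Local Notation C := (R[i]).
Local Notation V := ('cV[R[i]]_3).

Lemma hformC (z w : V) : hform w z = (hform z w)^*.
Proof. rewrite /hform !rmorphD !rmorphM /= !conjCK. ring. Qed.
Lemma hformDl (z z' w : V) : hform (z + z') w = hform z w + hform z' w.
Proof. rewrite /hform !mxE; ring. Qed.
Lemma hformDr (z w w' : V) : hform z (w + w') = hform z w + hform z w'.
Proof. rewrite /hform !mxE !rmorphD; ring. Qed.
Lemma hformZl a (z w : V) : hform (a *: z) w = a * hform z w.
Proof. rewrite /hform !mxE; ring. Qed.
Lemma hformZr a (z w : V) : hform z (a *: w) = a^* * hform z w.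
Proof. rewrite /hform !mxE !rmorphM; ring. Qed.
Lemma hformNl (z w : V) : hform (- z) w = - hform z w.
Proof. by rewrite -scaleN1r hformZl mulN1r. Qed.
Lemma hformNr (z w : V) : hform z (- w) = - hform z w.
Proof. by rewrite -scaleN1r hformZr rmorphN1 mulN1r. Qed.
Lemma hformBl (z z' w : V) : hform (z - z') w = hform z w - hform z' w.
Proof. by rewrite hformDl hformNl. Qed.
Lemma hformBr (z w w' : V) : hform z (w - w') = hform z w - hform z w'.
Proof. by rewrite hformDr hformNr. Qed.

Lemma det4_hform (x1 x2 x3 x4 y1 y2 y3 y4 : V) :
  let a11 := hform x1 y1 in let a12 := hform x1 y2 in
  let a13 := hform x1 y3 in let a14 := hform x1 y4 in
  let a21 := hform x2 y1 in let a22 := hform x2 y2 in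
  let a23 := hform x2 y3 in let a24 := hform x2 y4 in
  let a31 := hform x3 y1 in let a32 := hform x3 y2 in
  let a33 := hform x3 y3 in let a34 := hform x3 y4 in
  let a41 := hform x4 y1 in let a42 := hform x4 y2 in
  let a43 := hform x4 y3 in let a44 := hform x4 y4 in
  a11*a22*a33*a44 - a11*a22*a34*a43 - a11*a23*a32*a44 + a11*a23*a34*a42 + a11*a24*a32*a43 - a11*a24*a33*a42 - a12*a21*a33*a44 + a12*a21*a34*a43 + a12*a23*a31*a44 - a12*a23*a34*a41 - a12*a24*a31*a43 + a12*a24*a33*a41 + a13*a21*a32*a44 - a13*a21*a34*a42 - a13*a22*a31*a44 + a13*a22*a34*a41 + a13*a24*a31*a42 - a13*a24*a32*a41 - a14*a21*a32*a43 + a14*a21*a33*a42 + a14*a22*a31*a43 - a14*a22*a33*a41 - a14*a23*a31*a42 + a14*a23*a32*a41 = 0.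
Proof. rewrite /hform; cbv beta zeta; ring. Qed.

Definition det3c (x y z : V) : C :=
  x 0 0 * y 1%:R 0 * z 2%:R 0 - x 0 0 * y 2%:R 0 * z 1%:R 0
  - x 1%:R 0 * y 0 0 * z 2%:R 0 + x 1%:R 0 * y 2%:R 0 * z 0 0
  + x 2%:R 0 * y 0 0 * z 1%:R 0 - x 2%:R 0 * y 1%:R 0 * z 0 0.

Lemma det3_hform (x1 x2 x3 : V) :
  let a11 := hform x1 x1 in let a12 := hform x1 x2 in let a13 := hform x1 x3 in
  let a21 := hform x2 x1 in let a22 := hform x2 x2 in let a23 := hform x2 x3 in
  let a31 := hform x3 x1 in let a32 := hform x3 x2 in let a33 := hform x3 x3 in
  a11*a22*a33 - a11*a23*a32 - a12*a21*a33 + a12*a23*a31 + a13*a21*a32 - a13*a22*a31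
  = - (det3c x1 x2 x3 * (det3c x1 x2 x3)^*).
Proof. rewrite /hform /det3c; cbv beta zeta.
rewrite !rmorphD !rmorphN !rmorphM; ring. Qed.

End S2.


Section S3.
Variable R : realType.
Local Notation C := (R[i]).
Local Notation V := ('cV[R[i]]_3).

Lemma eq3 (z w : V) : z 0 0 = w 0 0 -> z 1%:R 0 = w 1%:R 0 -> z 2%:R 0 = w 2%:R 0 -> z = w.
Proof.
move=> h0 h1 h2; apply/matrixP => i j; rewrite (ord1 j).
case: i => [[|[|[|//]]] Hi].
- by have -> : Ordinal Hi = 0 by apply: val_inj.
- by have -> : Ordinal Hi = 1%:R by apply: val_inj.
- by have -> : Ordinal Hi = 2%:R by apply: val_inj.
Qed.

Lemma hform_self (z : V) : hform z z =
  z 0 0 * (z 2%:R 0)^* + rC (N (z 1%:R 0) ^+ 2) + z 2%:R 0 * (z 0 0)^*.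
Proof. by rewrite /hform mulconj. Qed.

Lemma posdef_zero (z : V) : z 0 0 = z 2%:R 0 -> hform z z = 0 -> z = 0.
Proof.
move=> E; rewrite hform_self -E mulconj -!rCD -rC0 => /rC_inj H.
have H0 : N (z 0 0) = 0.
  have := N_ge0 (z 0 0); have := N_ge0 (z 1%:R 0); nra.
have H1 : N (z 1%:R 0) = 0.
  have := N_ge0 (z 0 0); have := N_ge0 (z 1%:R 0); nra.
move/eqP: H0; rewrite N_eq0 => /eqP H0; move/eqP: H1; rewrite N_eq0 => /eqP H1.
by apply: eq3; rewrite !mxE // -E.
Qed.

Lemma null_orth (p q : V) : boundary_lift p -> boundary_lift q ->
  hform p q = 0 -> same_point p q.
Proof.
move=> [pn0 pp] [qn0 qq] pq.
have qp : hform q p = 0 by rewrite hformC pq conjC0.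
pose s := q 0 0 - q 2%:R 0; pose t := p 2%:R 0 - p 0 0.
pose z := s *: p + t *: q.
have z0 : z = 0.
  apply: posdef_zero.
    rewrite /z !mxE /s /t; ring.
  by rewrite /z !(hformDl, hformDr, hformZl, hformZr) pp pq qp qq; ring.
have [s0|s0] := eqVneq s 0.
  move: z0; rewrite /z s0 scale0r add0r => /eqP; rewrite scaler_eq0 (negPf qn0) orbF => /eqP t0.
  exfalso; move/negP: pn0; apply; apply/eqP; apply: posdef_zero => //.
  by apply/eqP; rewrite eq_sym -subr_eq0 -/t t0.
exists (- t / s); apply: (@scalerI _ _ s) => //.
rewrite scalerA mulrC divfK // scaleNr; apply/eqP.
by rewrite -addr_eq0 -/z z0.
Qed.

End S3.


Section S4.
Variable R : realType.

Lemma real_ptolemy (A B D : R) : 0 < A -> 0 < B -> 0 < D ->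
  A^+2 + B^+2 + D^+2 <= 2 * (A * B + B * D + D * A) ->
  let x := Num.sqrt (B / D) in let y := Num.sqrt (A / D) in
  [/\ 1 <= x + y, -1 <= x - y <= 1 &
    ((x + y = 1 \/ x - y = -1 \/ x - y = 1) <->
      A^+2 + B^+2 + D^+2 = 2 * (A * B + B * D + D * A))].
Proof.
move=> A0 B0 D0 H x y.
have x0 : 0 <= x by apply: sqrtr_ge0.
have y0 : 0 <= y by apply: sqrtr_ge0.
have hx : B = x^+2 * D by rewrite /x sqr_sqrtr ?divfK ?gt_eqF // ?divr_ge0 // ltW.
have hy : A = y^+2 * D by rewrite /y sqr_sqrtr ?divfK ?gt_eqF // ?divr_ge0 // ltW.
have E : 2 * (A * B + B * D + D * A) - (A^+2 + B^+2 + D^+2) =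
   - D^+2 * (((x + y)^+2 - 1) * ((x - y)^+2 - 1)).
  rewrite hx hy; ring.
have P : ((x + y)^+2 - 1) * ((x - y)^+2 - 1) <= 0.
  have : 0 <= - D^+2 * (((x + y)^+2 - 1) * ((x - y)^+2 - 1)) by rewrite -E subr_ge0.
  have : 0 < D^+2 by apply: exprn_gt0.
  nra.
have xy1 : 1 <= x + y.
  rewrite leNgt; apply/negP => h.
  have h1 : (x + y)^+2 < 1 by nra.
  have h2 : (x - y)^+2 < 1 by nra.
  nra.
have xy2 : (x - y)^+2 <= 1.
  rewrite leNgt; apply/negP => h.
  have h1 : 1 < (x + y)^+2 by nra.
  nra.
split => //.
  apply/andP; split; nra.
split.
  move=> h; apply/eqP; rewrite eq_sym -subr_eq0; apply/eqP; rewrite E.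
  case: h => [h|[h|h]]; rewrite h; ring.
move=> h.
have : ((x + y)^+2 - 1) * ((x - y)^+2 - 1) = 0.
  have : - D^+2 * (((x + y)^+2 - 1) * ((x - y)^+2 - 1)) = 0 by rewrite -E h subrr.
  move/eqP; rewrite mulf_eq0 oppr_eq0 expf_eq0 /= (gt_eqF D0) /= => /eqP //.
move/eqP; rewrite mulf_eq0 => /orP[] /eqP h'.
  left; nra.
have : (x - y = -1) \/ (x - y = 1).
  have : (x - y - 1) * (x - y + 1) = 0 by rewrite -h'; ring.
  move/eqP; rewrite mulf_eq0 => /orP[] /eqP ?; [right|left]; lra.
by right.
Qed.

End S4.


Section S5.
Variable R : realType.
Local Notation C := (R[i]).
Local Notation V := ('cV[R[i]]_3).

Lemma rel4 (p1 p2 p3 p4 : V) :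
  hform p1 p1 = 0 -> hform p2 p2 = 0 -> hform p3 p3 = 0 -> hform p4 p4 = 0 ->
  let a12 := hform p1 p2 in let a13 := hform p1 p3 in let a14 := hform p1 p4 in
  let a23 := hform p2 p3 in let a24 := hform p2 p4 in let a34 := hform p3 p4 in
  let c1 := a12 * a23 * a34 * a14^* in
  let c2 := a13 * a23^* * a24 * a14^* in
  let c3 := a12 * a24 * a34^* * a13^* in
  let A := N a12 * N a34 in let B := N a13 * N a24 in let D := N a14 * N a23 in
  A^+2 + B^+2 + D^+2 = 2 * (complex.Re c1 + complex.Re c2 + complex.Re c3).
Proof.
move=> h1 h2 h3 h4 a12 a13 a14 a23 a24 a34 c1 c2 c3 A B D.
move: (det4_hform p1 p2 p3 p4 p1 p2 p3 p4) => /=.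
rewrite h1 h2 h3 h4 (hformC p1 p2) (hformC p1 p3) (hformC p1 p4)
  (hformC p2 p3) (hformC p2 p4) (hformC p3 p4) -/a12 -/a13 -/a14 -/a23 -/a24 -/a34 => H.
have key : rC (A^+2 + B^+2 + D^+2) - ((c1 + c1^*) + (c2 + c2^*) + (c3 + c3^*)) = 0.
  rewrite -[RHS]H /A /B /D !exprMn !rCD (rCM (N a12 ^+ 2)) (rCM (N a13 ^+ 2)) (rCM (N a14 ^+ 2)) -!mulconj /c1 /c2 /c3 !rmorphM /= !conjCK.
  ring.
apply: rC_inj; move/eqP: key; rewrite subr_eq0 => /eqP ->.
by rewrite !addconj -!rCD; congr rC; ring.
Qed.

End S5.


Section S6.
Variable R : realType.
Local Notation C := (R[i]).
Local Notation V := ('cV[R[i]]_3).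

Lemma sq_real (T : C) (q : R) : 0 < q -> T ^+ 2 = rC q -> T = rC (complex.Re T) /\ complex.Re T != 0.
Proof.
case: T => a b /= q0; rewrite expr2 /= /rC => -[h1 h2].
have hab : a * b = 0 by lra.
move/eqP: hab; rewrite mulf_eq0 => /orP[/eqP ha|/eqP hb].
  by subst a; exfalso; nra.
subst b; split => //; apply/eqP => a0; subst a; lra.
Qed.

Lemma triple_real (p1 p2 p3 p4 : V) :
  hform p1 p1 = 0 -> hform p2 p2 = 0 -> hform p3 p3 = 0 -> hform p4 p4 = 0 ->
  let a12 := hform p1 p2 in let a13 := hform p1 p3 in let a14 := hform p1 p4 in
  let a23 := hform p2 p3 in let a24 := hform p2 p4 in let a34 := hform p3 p4 in
  a12 != 0 -> a13 != 0 -> a14 != 0 -> a23 != 0 -> a24 != 0 -> a34 != 0 ->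
  let c1 := a12 * a23 * a34 * a14^* in
  let c2 := a13 * a23^* * a24 * a14^* in
  let c3 := a12 * a24 * a34^* * a13^* in
  c1 = rC (N c1) -> c2 = rC (N c2) -> c3 = rC (N c3) ->
  exists t t124 t134 : R, [/\ a12 * a23 * a13^* = rC t, t < 0,
     a12 * a24 * a14^* = rC t124 & a13 * a34 * a14^* = rC t134].
Proof.
move=> h1 h2 h3 h4 a12 a13 a14 a23 a24 a34 n12 n13 n14 n23 n24 n34 c1 c2 c3 e1 e2 e3.
set T := a12 * a23 * a13^*.
set T124 := a12 * a24 * a14^*.
set T134 := a13 * a34 * a14^*.
have P1 : T * T134 = rC (N a13 ^+ 2 * N c1) by rewrite rCM -mulconj -e1 /T /T134 /c1; ring.
have P2 : T^* * T124 = rC (N a12 ^+ 2 * N c2).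
  by rewrite rCM -mulconj -e2 /T /T124 /c2 !rmorphM /= !conjCK; ring.
have P3 : T124 * T134^* = rC (N a14 ^+ 2 * N c3).
  by rewrite rCM -mulconj -e3 /T134 /T124 /c3 !rmorphM /= !conjCK; ring.
have Nc1 : 0 < N c1 by rewrite lt0r N_ge0 N_eq0 /c1 !mulf_neq0 // conjC_eq0.
have Nc2 : 0 < N c2 by rewrite lt0r N_ge0 N_eq0 /c2 !mulf_neq0 // conjC_eq0.
have Nc3 : 0 < N c3 by rewrite lt0r N_ge0 N_eq0 /c3 !mulf_neq0 // conjC_eq0.
have Np : forall z : C, z != 0 -> 0 < N z ^+ 2.
  by move=> z z0; apply: exprn_gt0; rewrite lt0r N_ge0 N_eq0 z0.
have key : (T * T134) * (T^* * T124)^* = T ^+ 2 * (T124 * T134^*)^*.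
  by rewrite /T /T124 /T134 !rmorphM /= !conjCK; ring.
rewrite P1 P2 P3 !rC_conj -rCM in key.
have T2 : T ^+ 2 = rC ((N a13 ^+ 2 * N c1 * (N a12 ^+ 2 * N c2)) / (N a14 ^+ 2 * N c3)).
  have nz : N a14 ^+ 2 * N c3 != 0 by rewrite mulf_neq0 // gt_eqF ?Np.
  rewrite rCM key rCV mulfK // -rC0; apply/eqP => /rC_inj/eqP.
  by rewrite (negPf nz).
have [Tr Tn0] : T = rC (complex.Re T) /\ complex.Re T != 0.
  apply: (sq_real _ T2).
  apply: divr_gt0; first apply: mulr_gt0; apply: mulr_gt0 => //; exact: Np.
set t := complex.Re T in Tr Tn0.
have Tc : T^* = T by rewrite Tr rC_conj.
have tneg : t < 0.
  move: (det3_hform p1 p2 p3) => /=.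
  rewrite h1 h2 h3 (hformC p1 p2) (hformC p1 p3) (hformC p2 p3) -/a12 -/a13 -/a23.
  have -> : 0 * 0 * 0 - 0 * a23 * a23^* - a12 * a12^* * 0 + a12 * a23 * a13^* + a13 * a12^* * a23^* - a13 * 0 * a13^* = T + T^*.
    by rewrite /T !rmorphM /= !conjCK; ring.
  rewrite addconj mulconj -rCN => /rC_inj E.
  have : t <= 0 by have := N_ge0 (det3c p1 p2 p3); rewrite -/t in E; nra.
  by rewrite le_eqVlt (negPf Tn0).
have T0 : T != 0 by rewrite Tr -rC0; apply/eqP => /rC_inj/eqP; rewrite (negPf Tn0).
exists t, (N a12 ^+ 2 * N c2 / t), (N a13 ^+ 2 * N c1 / t); split => //.
  by rewrite rCM rCV -P2 Tc -Tr mulrAC mulfV // mul1r.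
by rewrite rCM rCV -P1 -Tr mulrAC mulfV // mul1r.
Qed.

End S6.


Section S7.
Variable R : realType.
Local Notation C := (R[i]).
Local Notation V := ('cV[R[i]]_3).

Definition isJ (u0 u1 u2 : V) :=
  hform u0 u0 = 0 /\ hform u1 u1 = 1 /\ hform u2 u2 = 0 /\
      hform u0 u1 = 0 /\ hform u0 u2 = 1 /\ hform u1 u2 = 0.

Lemma gram_expand (u0 u1 u2 : V) (z0 z1 z2 w0 w1 w2 : C) : isJ u0 u1 u2 ->
  hform (z0 *: u0 + z1 *: u1 + z2 *: u2) (w0 *: u0 + w1 *: u1 + w2 *: u2)
  = z0 * w2^* + z1 * w1^* + z2 * w0^*.
Proof.
case=> h00 [h11 [h22 [h01 [h02 h12]]]].
have h10 : hform u1 u0 = 0 by rewrite hformC h01 conjC0.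
have h20 : hform u2 u0 = 1 by rewrite hformC h02 conjC1.
have h21 : hform u2 u1 = 0 by rewrite hformC h12 conjC0.
rewrite !(hformDl, hformDr, hformZl, hformZr).
rewrite h00 h11 h22 h01 h02 h12 h10 h20 h21; ring.
Qed.

Definition mk3 (u0 u1 u2 : V) : 'M[C]_3 :=
  \matrix_(i < 3, j < 3) (if j == 0 then u0 i 0 else if j == 1%:R then u1 i 0 else u2 i 0).

Lemma mk3_mul (u0 u1 u2 x : V) :
  mk3 u0 u1 u2 *m x = x 0 0 *: u0 + x 1%:R 0 *: u1 + x 2%:R 0 *: u2.
Proof.
apply/matrixP => i j; rewrite !mxE !big_ord_recr big_ord0 /= !mxE /= (ord1 j).
rewrite (_ : widen_ord _ (widen_ord _ ord_max) = 0); last by apply: val_inj.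
rewrite (_ : widen_ord _ ord_max = 1%:R); last by apply: val_inj.
rewrite (_ : ord_max = 2%:R :> 'I_3); last by apply: val_inj.
ring.
Qed.

Lemma mk3_U21 (u0 u1 u2 : V) : isJ u0 u1 u2 -> isU21 (mk3 u0 u1 u2).
Proof. by move=> hJ z w; rewrite !mk3_mul gram_expand. Qed.

Lemma nondeg (u0 u1 u2 w : V) : isJ u0 u1 u2 ->
  hform w u0 = 0 -> hform w u1 = 0 -> hform w u2 = 0 -> w = 0.
Proof.
move=> hJ; case: (hJ) => h00 [h11 [h22 [h01 [h02 h12]]]] w0 w1 w2.
have h10 : hform u1 u0 = 0 by rewrite hformC h01 conjC0.
have h20 : hform u2 u0 = 1 by rewrite hformC h02 conjC1.
have h21 : hform u2 u1 = 0 by rewrite hformC h12 conjC0.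
have key : forall e : V, hform w e = 0.
  move=> e; move: (det4_hform u0 u1 u2 w u0 u1 u2 e) => /=.
  rewrite h00 h11 h22 h01 h02 h12 h10 h20 h21 w0 w1 w2 => H.
  apply/eqP; rewrite -oppr_eq0; apply/eqP; rewrite -[RHS]H; ring.
pose e0 : V := \col_(i < 3) (if i == 0 then 1 else 0).
pose e1 : V := \col_(i < 3) (if i == 1%:R then 1 else 0).
pose e2 : V := \col_(i < 3) (if i == 2%:R then 1 else 0).
have := key e0; have := key e1; have := key e2.
rewrite /hform /e0 /e1 /e2 !mxE /= !rmorph0 !rmorph1 !mulr0 !mulr1 !add0r !addr0 => k2 k1 k0.
by apply: eq3; rewrite !mxE.
Qed.

Lemma frame (u0 u2 q : V) (al ga be : R) :
  hform u0 u0 = 0 -> hform u2 u2 = 0 -> hform u0 u2 = 1 -> hform q q = 0 ->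
  hform q u0 = rC ga -> hform q u2 = rC al -> be ^+ 2 = - (2 * al * ga) -> 0 < be ->
  let r := (rC be)^-1 *: (q - rC al *: u0 - rC ga *: u2) in
  isJ u0 r u2 /\ q = rC al *: u0 + rC be *: r + rC ga *: u2.
Proof.
move=> h00 h22 h02 hqq hq0 hq2 hbe be0 r.
have h20 : hform u2 u0 = 1 by rewrite hformC h02 conjC1.
have h0q : hform u0 q = rC ga by rewrite hformC hq0 rC_conj.
have h2q : hform u2 q = rC al by rewrite hformC hq2 rC_conj.
have bn0 : rC be != 0 by rewrite -rC0; apply/eqP => /rC_inj; lra.
have ib : (rC be)^-1^* = (rC be)^-1 by rewrite -rCV rC_conj.
split; last first.
  by rewrite /r scalerA mulfV // scale1r -addrA subrK addrC subrK.

have hrr : hform r r = 1.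
  rewrite /r !(hformDl, hformDr, hformZl, hformZr, hformBl, hformBr, hformNl, hformNr).
  rewrite ?h00 ?h22 ?h02 ?h20 ?hqq ?hq0 ?hq2 ?h0q ?h2q ?ib ?rC_conj.
  apply: (mulIf bn0); rewrite mul1r.
  apply: (mulIf bn0).
  have -> : rC be * rC be = rC (be ^+ 2) by rewrite rCX expr2.
  rewrite hbe rCN !rCM rCn.
  field; exact: bn0.
have h0r : hform u0 r = 0.
  rewrite /r !(hformDl, hformDr, hformZl, hformZr, hformBl, hformBr, hformNl, hformNr).
  rewrite ?h00 ?h22 ?h02 ?h20 ?hqq ?hq0 ?hq2 ?h0q ?h2q ?ib ?rC_conj; ring.
have hr2 : hform r u2 = 0.
  rewrite /r !(hformDl, hformDr, hformZl, hformZr, hformBl, hformBr, hformNl, hformNr).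
  rewrite ?h00 ?h22 ?h02 ?h20 ?hqq ?hq0 ?hq2 ?h0q ?h2q ?ib ?rC_conj; ring.
by do !split.
Qed.

End S7.


Section S8.
Variable R : realType.
Local Notation C := (R[i]).
Local Notation V := ('cV[R[i]]_3).

Definition col3 (a b c : R) : 'cV[R]_3 := \col_(i < 3) [:: a; b; c]`_i.
Definition rcol (a b c : R) : V := map_mx (@rC R) (col3 a b c).

Lemma rcol0 a b c : rcol a b c 0 0 = rC a. Proof. by rewrite !mxE. Qed.
Lemma rcol1 a b c : rcol a b c 1%:R 0 = rC b. Proof. by rewrite !mxE. Qed.
Lemma rcol2 a b c : rcol a b c 2%:R 0 = rC c. Proof. by rewrite !mxE. Qed.

Lemma hform_rcol a b c a' b' c' :
  hform (rcol a b c) (rcol a' b' c') = rC (a * c' + b * b' + c * a').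
Proof. by rewrite /hform !rcol0 !rcol1 !rcol2 !rC_conj -!rCM -!rCD. Qed.

Lemma std_rcol a b c : (a != 0) || (c != 0) -> 2 * a * c + b ^+ 2 = 0 -> std_Rcircle_lift (rcol a b c).
Proof.
move=> ac h; split; first by exists (col3 a b c).
split.
  apply/eqP => /matrixP E.
  have := E 0 0; have := E 2%:R 0; rewrite rcol2 rcol0 !mxE -rC0 => /rC_inj c0 /rC_inj a0.
  by move: ac; rewrite a0 c0 eqxx.
by rewrite hform_rcol -rC0; congr rC; rewrite -h; ring.
Qed.

Lemma sp_in (p1 p2 p3 p4 : V) (P : V -> Prop) :
  P p1 -> P p2 -> P p3 -> P p4 -> forall p, p \in [:: p1; p2; p3; p4] -> P p.
Proof. by move=> h1 h2 h3 h4 p; rewrite !inE => /or4P[] /eqP ->. Qed.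

Lemma construct (p1 p2 p3 p4 : V) :
  boundary_lift p1 -> boundary_lift p2 -> boundary_lift p3 -> boundary_lift p4 ->
  let a12 := hform p1 p2 in let a13 := hform p1 p3 in let a14 := hform p1 p4 in
  let a23 := hform p2 p3 in let a24 := hform p2 p4 in let a34 := hform p3 p4 in
  a12 != 0 -> a13 != 0 -> a14 != 0 -> a23 != 0 -> a24 != 0 -> a34 != 0 ->
  let c1 := a12 * a23 * a34 * a14^* in
  let c2 := a13 * a23^* * a24 * a14^* in
  let c3 := a12 * a24 * a34^* * a13^* in
  c1 = rC (N c1) -> c2 = rC (N c2) -> c3 = rC (N c3) ->
  on_common_Rcircle p1 p2 p3 p4.
Proof.
move=> [_ h1] [_ h2] [_ h3] [_ h4] a12 a13 a14 a23 a24 a34 n12 n13 n14 n23 n24 n34 c1 c2 c3 e1 e2 e3.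
have [t [t124 [t134 [Tt tneg T124 T134]]]] :=
  triple_real h1 h2 h3 h4 n12 n13 n14 n23 n24 n34 e1 e2 e3.
rewrite -/a12 -/a13 -/a14 -/a23 -/a24 -/a34 in Tt T124 T134.
have Np : forall z : C, z != 0 -> 0 < N z ^+ 2.
  by move=> z z0; apply: exprn_gt0; rewrite lt0r N_ge0 N_eq0 z0.
have n12c : a12^* != 0 by rewrite conjC_eq0.
pose u0 := p1; pose u2 := (a12^*)^-1 *: p2.
pose q3 := a13 *: p3.
pose ga := N a13 ^+ 2; pose al := t / N a12 ^+ 2.
have al0 : al < 0 by rewrite /al ltr_pdivrMr ?mul0r ?Np.
have ga0 : 0 < ga by apply: Np.
pose be := Num.sqrt (- (2 * al * ga)).
have be0 : 0 < be by rewrite sqrtr_gt0; nra.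
have hbe : be ^+ 2 = - (2 * al * ga) by rewrite sqr_sqrtr //; nra.
have h00 : hform u0 u0 = 0 by [].
have h22 : hform u2 u2 = 0 by rewrite /u2 hformZl hformZr h2 !mulr0.
have h02 : hform u0 u2 = 1.
  by rewrite /u2 hformZr -/a12 fmorphV /= conjCK mulVf.
have hq3 : hform q3 q3 = 0 by rewrite /q3 hformZl hformZr h3 !mulr0.
have hq30 : hform q3 u0 = rC ga by rewrite /q3 hformZl /ga -mulconj /u0 hformC.
have Tc : a12^* * a23^* * a13 = rC t.
  by rewrite -rC_conj -Tt !rmorphM /= conjCK.
have hq32 : hform q3 u2 = rC al.
  rewrite /q3 /u2 hformZl hformZr (hformC p2 p3) -/a23 fmorphV /= conjCK.
  rewrite /al rCM rCV -mulconj -Tc; field.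
  by rewrite n12 n12c.
have [hJ q3E] := frame h00 h22 h02 hq3 hq30 hq32 hbe be0.
set r := _ *: _ in hJ q3E.
clearbody r.
pose g := mk3 u0 r u2.
have gU : isU21 g by apply: mk3_U21.
have gmul : forall a b c, g *m rcol a b c = rC a *: u0 + rC b *: r + rC c *: u2.
  by move=> a b c; rewrite mk3_mul rcol0 rcol1 rcol2.
have gmul' : forall x, g *m x = x 0 0 *: u0 + x 1%:R 0 *: r + x 2%:R 0 *: u2 by move=> x; apply: mk3_mul.
clearbody g.
pose q4 := a14 *: p4.
pose ga4 := N a14 ^+ 2; pose al4 := t124 / N a12 ^+ 2.
pose be4 := (t134 - al * ga4 - ga * al4) / be.
case: (hJ) => _ [hrr [_ [h0r [_ hr2]]]].
have hr0 : hform r u0 = 0 by rewrite hformC h0r conjC0.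
have h20 : hform u2 u0 = 1 by rewrite hformC h02 conjC1.
have h2r : hform u2 r = 0 by rewrite hformC hr2 conjC0.
have hq40 : hform q4 u0 = rC ga4 by rewrite /q4 hformZl /ga4 -mulconj /u0 hformC.
have T124c : a12^* * a24^* * a14 = rC t124.
  by rewrite -rC_conj -T124 !rmorphM /= conjCK.
have hq42 : hform q4 u2 = rC al4.
  rewrite /q4 /u2 hformZl hformZr (hformC p2 p4) -/a24 fmorphV /= conjCK.
  rewrite /al4 rCM rCV -mulconj -T124c; field.
  by rewrite n12 n12c.
have T134c : a13^* * a34^* * a14 = rC t134.
  by rewrite -rC_conj -T134 !rmorphM /= conjCK.
have hq43 : hform q4 q3 = rC t134.
  by rewrite /q4 /q3 hformZl hformZr (hformC p3 p4) -/a34 -T134c; ring.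
have q4d : q4 = a14 *: p4 by [].
have u2d : u2 = (a12^*)^-1 *: p2 by [].
have q3d : q3 = a13 *: p3 by [].
have u0d : u0 = p1 by [].
clearbody q4 u2 q3 u0.
have bn0 : rC be != 0 by rewrite -rC0; apply/eqP => /rC_inj; lra.
have hq4r : hform q4 r = rC be4.
  have : hform q4 q3 = rC al * rC ga4 + rC be * hform q4 r + rC ga * rC al4.
    rewrite q3E !(hformDr, hformZr) !rC_conj hq40 hq42 -(rC_conj be); ring.
  rewrite hq43 => E.
  rewrite /be4 rCM rCV !rCB (rCM al ga4) (rCM ga al4) E; field; exact: bn0.
have q4E : q4 = g *m rcol al4 be4 ga4.
  apply/eqP; rewrite -subr_eq0; apply/eqP; apply: (nondeg hJ).
  - rewrite hformBl gmul !(hformDl, hformZl) hq40 h00 hr0 h20; ring.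
  - rewrite hformBl gmul !(hformDl, hformZl) hq4r h0r hrr h2r; ring.
  - rewrite hformBl gmul !(hformDl, hformZl) hq42 h02 hr2 h22; ring.
have a14n : a14 != 0 := n14.
exists g; split => //.
apply: sp_in.
- exists (rcol 1 0 0); split.
    by apply: std_rcol; [rewrite oner_neq0|ring].
  by exists 1; rewrite scale1r gmul rC1 rC0 !scale0r scale1r !addr0 u0d.
- exists (rcol 0 0 1); split.
    by apply: std_rcol; [rewrite oner_neq0 orbT|ring].
  by exists a12^*; rewrite gmul rC1 rC0 !scale0r scale1r !add0r u2d scalerA mulfV // scale1r.
- exists (rcol al be ga); split.
    apply: std_rcol; first by rewrite (lt_eqF al0).
    by rewrite hbe; ring.
  by exists a13^-1; rewrite gmul -q3E q3d scalerA mulVf // scale1r.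
- exists (rcol al4 be4 ga4); split.
    apply: std_rcol; first by rewrite (gt_eqF (Np _ n14)) orbT.
    have H : hform (rcol al4 be4 ga4) (rcol al4 be4 ga4) = 0.
      by rewrite -gU -q4E q4d hformZl hformZr h4 !mulr0.
    rewrite hform_rcol -rC0 in H; move/rC_inj: H => H; rewrite -H; ring.
  by exists a14^-1; rewrite -q4E q4d scalerA mulVf // scale1r.
Qed.

End S8.


Section S9.
Variable R : realType.
Local Notation C := (R[i]).
Local Notation V := ('cV[R[i]]_3).

Definition bb (s s' : R * R) : R := s.1 * s'.1 + s.2 * s'.2 - 1.

Lemma hform_std (s s' : R * R) : hform (std_param s) (std_param s') = rC (bb s s').
Proof.
rewrite (_ : std_param s = rcol (1 + s.1) s.2 (- (1 - s.1) / 2)) //.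
rewrite (_ : std_param s' = rcol (1 + s'.1) s'.2 (- (1 - s'.1) / 2)) //.
by rewrite hform_rcol /bb; congr rC; field.
Qed.

Definition rx (s1 s : R * R) := s1.1 * s.1 + s1.2 * s.2.
Definition ry (s1 s : R * R) := s1.1 * s.2 - s1.2 * s.1.
Definition tpar (s1 s : R * R) : R := ry s1 s / (1 - rx s1 s).
Definition phi (s1 : R * R) (t : R) : R * R :=
  (s1.1 * ((t^+2 - 1) / (t^+2 + 1)) - s1.2 * (2 * t / (t^+2 + 1)),
   s1.1 * (2 * t / (t^+2 + 1)) + s1.2 * ((t^+2 - 1) / (t^+2 + 1))).

Lemma rxy1 s1 s : S1 s1 -> S1 s -> rx s1 s ^+ 2 + ry s1 s ^+ 2 = 1.
Proof.
rewrite /S1 /rx /ry /= => h1 h.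
have -> : (s1.1 * s.1 + s1.2 * s.2) ^+ 2 + (s1.1 * s.2 - s1.2 * s.1) ^+ 2 =
  (s1.1 ^+ 2 + s1.2 ^+ 2) * (s.1 ^+ 2 + s.2 ^+ 2) by ring.
by rewrite h1 h mul1r.
Qed.

Lemma rx_ne1 s1 s : S1 s1 -> S1 s -> s != s1 -> 1 - rx s1 s != 0.
Proof.
case: s1 s => a b [u v]; rewrite /S1 /rx /= => h1 h ne.
apply/eqP => E; move/eqP: ne; apply.
have e1 : (u - a)^+2 + (v - b)^+2 = 0 by nra.
move/eqP: e1; rewrite paddr_eq0 ?sqr_ge0 // !sqrf_eq0 !subr_eq0 => /andP[/eqP -> /eqP ->] //.
Qed.

Lemma t_facts (x y : R) : x ^+ 2 + y ^+ 2 = 1 -> 1 - x != 0 ->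
  let t := y / (1 - x) in (1 + t ^+ 2) * (1 - x) = 2 /\ t * (1 - x) = y.
Proof.
move=> h hx t.
have ty : t * (1 - x) = y by rewrite /t divfK.
split => //.
have : (t * (1 - x)) ^+ 2 = (1 - x) * (1 + x) by rewrite ty; nra.
rewrite exprMn => E.
have E2 : t ^+ 2 * (1 - x) = 1 + x.
  apply: (mulIf hx); rewrite -mulrA -expr2 E; ring.
by rewrite mulrDl mul1r E2; ring.
Qed.

Lemma bb_t s1 s s' : S1 s1 -> S1 s -> S1 s' -> s != s1 -> s' != s1 ->
  bb s s' = - (tpar s1 s - tpar s1 s') ^+ 2 * (1 - rx s1 s) * (1 - rx s1 s') / 2.
Proof.
move=> h1 h h' n n'.
have [P1 Q1] := t_facts (rxy1 h1 h) (rx_ne1 h1 h n).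
have [P2 Q2] := t_facts (rxy1 h1 h') (rx_ne1 h1 h' n').
rewrite -/(tpar s1 s) in P1 Q1; rewrite -/(tpar s1 s') in P2 Q2.
have E : bb s s' = rx s1 s * rx s1 s' + ry s1 s * ry s1 s' - 1.
  move: h1; rewrite /S1 /bb /rx /ry => h1.
  have -> : (s1.1 * s.1 + s1.2 * s.2) * (s1.1 * s'.1 + s1.2 * s'.2) +
    (s1.1 * s.2 - s1.2 * s.1) * (s1.1 * s'.2 - s1.2 * s'.1) =
    (s1.1 ^+ 2 + s1.2 ^+ 2) * (s.1 * s'.1 + s.2 * s'.2) by ring.
  by rewrite h1 mul1r.
rewrite E -Q1 -Q2.
set t := tpar s1 s; set t' := tpar s1 s'; set x := rx s1 s; set x' := rx s1 s'.
have e1 : t ^+ 2 * (1 - x) = 1 + x.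
  have -> : t ^+ 2 * (1 - x) = (1 + t ^+ 2) * (1 - x) - (1 - x) by ring.
  rewrite P1; ring.
have e2 : t' ^+ 2 * (1 - x') = 1 + x'.
  have -> : t' ^+ 2 * (1 - x') = (1 + t' ^+ 2) * (1 - x') - (1 - x') by ring.
  rewrite P2; ring.
have -> : - (t - t') ^+ 2 * (1 - x) * (1 - x') / 2 =
   - ((t ^+ 2 * (1 - x)) * (1 - x') + (t' ^+ 2 * (1 - x')) * (1 - x)) / 2
   + t * t' * (1 - x) * (1 - x') by field.
by rewrite e1 e2; field.
Qed.

End S9.


Section S10.
Local Open Scope classical_set_scope.
Variable R : realType.

Lemma den_ne0 (t : R) : t ^+ 2 + 1 != 0.
Proof. by rewrite gt_eqF //; nra. Qed.

Lemma phi_t (s1 s : R * R) : S1 s1 -> S1 s -> s != s1 -> phi s1 (tpar s1 s) = s.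
Proof.
move=> h1 h n.
have [P Q] := t_facts (rxy1 h1 h) (rx_ne1 h1 h n).
rewrite -/(tpar s1 s) in P Q.
set t := tpar s1 s in P Q *.
have d := den_ne0 t.
have EX : (t ^+ 2 - 1) / (t ^+ 2 + 1) = rx s1 s.
  apply: (mulIf d); rewrite divfK //.
  have -> : t ^+ 2 - 1 = (1 + t^+2) * (1 - rx s1 s) - 2 + rx s1 s * (t ^+ 2 + 1) by ring.
  by rewrite P; ring.
have EY : 2 * t / (t ^+ 2 + 1) = ry s1 s.
  apply: (mulIf d); rewrite divfK // -Q.
  have -> : t * (1 - rx s1 s) * (t ^+ 2 + 1) = t * ((1 + t^+2) * (1 - rx s1 s)) by ring.
  by rewrite P; ring.
rewrite /phi EX EY /rx /ry.
move: h1; rewrite /S1 /= => h1.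
case: s {P Q t d EX EY n h} => u v /=.
congr pair.
  have -> : s1.1 * (s1.1 * u + s1.2 * v) - s1.2 * (s1.1 * v - s1.2 * u) =
     (s1.1 ^+ 2 + s1.2 ^+ 2) * u by ring.
  by rewrite h1 mul1r.
have -> : s1.1 * (s1.1 * v - s1.2 * u) + s1.2 * (s1.1 * u + s1.2 * v) =
   (s1.1 ^+ 2 + s1.2 ^+ 2) * v by ring.
by rewrite h1 mul1r.
Qed.

Lemma rx_phi (s1 : R * R) t : S1 s1 -> rx s1 (phi s1 t) = (t ^+ 2 - 1) / (t ^+ 2 + 1).
Proof.
rewrite /S1 /rx /phi /= => h1.
set X := ((t ^+ 2 - 1) / (t ^+ 2 + 1)); set Y := (2 * t / (t ^+ 2 + 1)).
have -> : s1.1 * (s1.1 * X - s1.2 * Y) + s1.2 * (s1.1 * Y + s1.2 * X) =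
  (s1.1 ^+ 2 + s1.2 ^+ 2) * X by ring.
by rewrite h1 mul1r.
Qed.

Lemma ry_phi (s1 : R * R) t : S1 s1 -> ry s1 (phi s1 t) = 2 * t / (t ^+ 2 + 1).
Proof.
rewrite /S1 /ry /phi /= => h1.
set X := ((t ^+ 2 - 1) / (t ^+ 2 + 1)); set Y := (2 * t / (t ^+ 2 + 1)).
have -> : s1.1 * (s1.1 * Y + s1.2 * X) - s1.2 * (s1.1 * X - s1.2 * Y) =
  (s1.1 ^+ 2 + s1.2 ^+ 2) * Y by ring.
by rewrite h1 mul1r.
Qed.

Lemma tpar_phi (s1 : R * R) t : S1 s1 -> tpar s1 (phi s1 t) = t.
Proof.
move=> h1; rewrite /tpar rx_phi // ry_phi //.
have d := den_ne0 t.
have -> : 1 - (t ^+ 2 - 1) / (t ^+ 2 + 1) = 2 / (t ^+ 2 + 1) by field.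
by field; rewrite d.
Qed.

Lemma phi_S1 (s1 : R * R) t : S1 s1 -> S1 (phi s1 t).
Proof.
move=> h1; have d := den_ne0 t.
move: h1; rewrite /S1 /phi /= => h1.
set X := ((t ^+ 2 - 1) / (t ^+ 2 + 1)); set Y := (2 * t / (t ^+ 2 + 1)).
have -> : (s1.1 * X - s1.2 * Y) ^+ 2 + (s1.1 * Y + s1.2 * X) ^+ 2 =
  (s1.1 ^+ 2 + s1.2 ^+ 2) * (X ^+ 2 + Y ^+ 2) by ring.
by rewrite h1 mul1r /X /Y; field.
Qed.

Lemma phi_ne (s1 : R * R) t : S1 s1 -> phi s1 t != s1.
Proof.
move=> h1; apply/eqP => E.
have := rx_phi t h1; rewrite E /rx.
move: (h1); rewrite /S1 -!expr2 => ->.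
have d := den_ne0 t.
move/(congr1 (fun z => z * (t ^+ 2 + 1))); rewrite divfK // mul1r.
lra.
Qed.

End S10.


Section S11.
Local Open Scope classical_set_scope.
Variable R : realType.

Lemma cont_den : continuous (fun t : R => (t ^+ 2 + 1)^-1).
Proof.
move=> t; apply: cvgV; first exact: den_ne0.
apply: cvgD; [exact: exprn_continuous | exact: cvg_cst].
Qed.

Lemma contX : continuous (fun t : R => (t ^+ 2 - 1) / (t ^+ 2 + 1)).
Proof.
move=> t; apply: cvgM; last exact: cont_den.
apply: cvgB; [exact: exprn_continuous | exact: cvg_cst].
Qed.

Lemma contY : continuous (fun t : R => 2 * t / (t ^+ 2 + 1)).
Proof.
move=> t; apply: cvgM; last exact: cont_den.
apply: cvgM; [exact: cvg_cst | exact: cvg_id].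
Qed.

Lemma phi_cont (s1 : R * R) : continuous (phi s1).
Proof.
move=> t; rewrite /continuous_at /phi; apply: (cvg_pair (F := nbhs t) (G := nbhs _) (H := nbhs _)) => /=.
  apply: cvgB; apply: cvgM; (exact: cvg_cst || exact: contX || exact: contY).
apply: cvgD; apply: cvgM; (exact: cvg_cst || exact: contX || exact: contY).
Qed.

End S11.


Section S12.
Local Open Scope classical_set_scope.
Variable R : realType.

Lemma arc_conn_I (s1 : R * R) (tk tj tl : R) (I : interval R) : S1 s1 ->
  tj \in I -> tl \in I -> tk \notin I ->
  connected_component (@S1 R `\` [set s1; phi s1 tk]) (phi s1 tj) (phi s1 tl).
Proof.
move=> h1 hj hl hk.
pose Cc := phi s1 @` [set` I].
exists Cc; last by exists tl.
split.
- by exists tj.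
- move=> z [t tI <-]; split; first exact: phi_S1.
  move=> [E|E].
    by move/eqP: (phi_ne t h1); rewrite E.
  have : t = tk by rewrite -(tpar_phi t h1) E tpar_phi.
  by move=> Et; move: hk; rewrite -Et tI.
- apply: connected_continuous_connected.
    by apply/connected_intervalP; exact: interval_is_interval.
  by apply: continuous_subspaceT; exact: phi_cont.
Qed.

Lemma arc_conn (s1 : R * R) (tk tj tl : R) : S1 s1 -> 0 < (tj - tk) * (tl - tk) ->
  connected_component (@S1 R `\` [set s1; phi s1 tk]) (phi s1 tj) (phi s1 tl).
Proof.
move=> h1 h.
have [jk|jk] := ltP tk tj.
  apply: (@arc_conn_I s1 tk tj tl (`]tk, +oo[)%R); rewrite ?in_itv /= ?andbT ?ltxx //.
  by rewrite ltNge; apply/negP => lk; nra.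
apply: (@arc_conn_I s1 tk tj tl (`]-oo, tk[)%R); rewrite ?in_itv /= ?ltxx //.
  have : tj != tk by apply/eqP => e; rewrite e subrr mul0r in h; lra.
  by rewrite lt_neqAle jk andbT.
by rewrite ltNge; apply/negP => lk; nra.
Qed.

End S12.


Section S13.
Variable R : realType.
Local Notation C := (R[i]).
Local Notation V := ('cV[R[i]]_3).

Lemma bb_eq0 (s s' : R * R) : S1 s -> S1 s' -> bb s s' = 0 -> s = s'.
Proof.
case: s s' => u v [u' v']; rewrite /S1 /bb /= => h h' E.
have e1 : (u - u')^+2 + (v - v')^+2 = 0 by nra.
move/eqP: e1; rewrite paddr_eq0 ?sqr_ge0 // !sqrf_eq0 !subr_eq0 => /andP[/eqP -> /eqP ->] //.
Qed.

Lemma bbC (s s' : R * R) : bb s s' = bb s' s.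
Proof. rewrite /bb; ring. Qed.

Lemma bb1 (s1 s : R * R) : bb s s1 = - (1 - rx s1 s).
Proof. rewrite /bb /rx; ring. Qed.

Lemma CL (p1 p2 p3 p4 : V) (g : 'M[C]_3) (s1 s2 s3 s4 : R * R) :
  boundary_lift p1 -> boundary_lift p2 -> boundary_lift p3 -> boundary_lift p4 ->
  ~ same_point p1 p2 -> ~ same_point p1 p3 -> ~ same_point p1 p4 ->
  ~ same_point p2 p3 -> ~ same_point p2 p4 -> ~ same_point p3 p4 ->
  isU21 g -> S1 s1 -> S1 s2 -> S1 s3 -> S1 s4 ->
  same_point p1 (g *m std_param s1) -> same_point p2 (g *m std_param s2) ->
  same_point p3 (g *m std_param s3) -> same_point p4 (g *m std_param s4) ->
  exists t2 t3 t4 : R, [/\ [&& t2 != t3, t2 != t4 & t3 != t4],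
    KRX p1 p2 p3 p4 = rC (((t4 - t2) / (t3 - t2)) ^+ 2),
    KRX p1 p3 p2 p4 = rC (((t4 - t3) / (t2 - t3)) ^+ 2) &
    [/\ 0 < (t2 - t3) * (t4 - t3) -> ~ separates s1 s3 s2 s4,
        0 < (t3 - t2) * (t4 - t2) -> ~ separates s1 s2 s3 s4 &
        0 < (t2 - t4) * (t3 - t4) -> ~ separates s1 s4 s2 s3]].
Proof.
move=> [p1n _] [p2n _] [p3n _] [p4n _] d12 d13 d14 d23 d24 d34 gU h1 h2 h3 h4
  [l1 e1] [l2 e2] [l3 e3] [l4 e4].
have lnz : forall (p : V) l (q : V), p != 0 -> p = l *: q -> l != 0.
  by move=> p l q pn e; apply/eqP => l0; move: pn; rewrite e l0 scale0r eqxx.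
have l1n := lnz _ _ _ p1n e1; have l2n := lnz _ _ _ p2n e2.
have l3n := lnz _ _ _ p3n e3; have l4n := lnz _ _ _ p4n e4.
have sne : forall (p q : V) l m (s s' : R * R), p = l *: (g *m std_param s) ->
   q = m *: (g *m std_param s') -> m != 0 -> ~ same_point p q -> s != s'.
  move=> p q l m s s' ep eq mn nsp; apply/eqP => ess; apply: nsp.
  exists (l / m); rewrite ep eq ess scalerA divfK //.
have n12 := sne _ _ _ _ _ _ e1 e2 l2n d12; have n13 := sne _ _ _ _ _ _ e1 e3 l3n d13.
have n14 := sne _ _ _ _ _ _ e1 e4 l4n d14; have n23 := sne _ _ _ _ _ _ e2 e3 l3n d23.
have n24 := sne _ _ _ _ _ _ e2 e4 l4n d24; have n34 := sne _ _ _ _ _ _ e3 e4 l4n d34.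
have hf : forall (p q : V) l m (s s' : R * R), p = l *: (g *m std_param s) ->
   q = m *: (g *m std_param s') -> hform p q = l * m^* * rC (bb s s').
  by move=> p q l m s s' ep eq; rewrite ep eq hformZl hformZr gU hform_std; ring.
have n21 : s2 != s1 by rewrite eq_sym.
have n31 : s3 != s1 by rewrite eq_sym.
have n41 : s4 != s1 by rewrite eq_sym.
set t2 := tpar s1 s2; set t3 := tpar s1 s3; set t4 := tpar s1 s4.
have x2 := rx_ne1 h1 h2 n21; have x3 := rx_ne1 h1 h3 n31; have x4 := rx_ne1 h1 h4 n41.
have b23 := bb_t h1 h2 h3 n21 n31; have b24 := bb_t h1 h2 h4 n21 n41.
have b34 := bb_t h1 h3 h4 n31 n41.
rewrite -/t2 -/t3 -/t4 in b23 b24 b34.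
have tne : forall (s s' : R * R) (t t' : R), S1 s -> S1 s' -> s != s' ->
   bb s s' = - (t - t') ^+ 2 * (1 - rx s1 s) * (1 - rx s1 s') / 2 -> t != t'.
  move=> s s' t t' hs hs' ns E; apply/eqP => et; move/eqP: ns; apply.
  by apply: bb_eq0 => //; rewrite E et subrr expr0n /= oppr0 !mul0r.
have t23 := tne _ _ _ _ h2 h3 n23 b23; have t24 := tne _ _ _ _ h2 h4 n24 b24.
have t34 := tne _ _ _ _ h3 h4 n34 b34.
have bnz : forall s s' : R * R, S1 s -> S1 s' -> s != s' -> rC (bb s s') != 0.
  move=> s s' hs hs' ns; rewrite -rC0; apply/eqP => /rC_inj E.
  by move/eqP: ns; apply; apply: bb_eq0.
have n32 : s3 != s2 by rewrite eq_sym.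
have n42 : s4 != s2 by rewrite eq_sym.
exists t2, t3, t4; split; first by rewrite t23 t24 t34.
- rewrite /KRX (hf _ _ _ _ _ _ e3 e1) (hf _ _ _ _ _ _ e4 e2) (hf _ _ _ _ _ _ e4 e1)
    (hf _ _ _ _ _ _ e3 e2).
  have c1 : l1^* != 0 by rewrite conjC_eq0.
  have c2 : l2^* != 0 by rewrite conjC_eq0.
  have B41 := bnz _ _ h4 h1 n41.
  have B32 := bnz _ _ h3 h2 (n32).
  have B31 := bnz _ _ h3 h1 n31.
  have B42 := bnz _ _ h4 h2 (n42).
  transitivity (rC (bb s3 s1 * bb s4 s2 / (bb s4 s1 * bb s3 s2))).
    rewrite !rCM rCV rCM; field.
    by rewrite /= ?conjC_eq0 B41 B32 l1n l2n l3n l4n.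
  congr rC; rewrite (bb1 s1 s3) (bb1 s1 s4) (bbC s4 s2) (bbC s3 s2) b23 b24; field.
  by rewrite x3 x4 x2 !subr_eq0 t23 eq_sym t23.
- rewrite /KRX (hf _ _ _ _ _ _ e2 e1) (hf _ _ _ _ _ _ e4 e3) (hf _ _ _ _ _ _ e4 e1)
    (hf _ _ _ _ _ _ e2 e3).
  have c1 : l1^* != 0 by rewrite conjC_eq0.
  have c3 : l3^* != 0 by rewrite conjC_eq0.
  have B41 := bnz _ _ h4 h1 n41.
  have B23 := bnz _ _ h2 h3 n23.
  transitivity (rC (bb s2 s1 * bb s4 s3 / (bb s4 s1 * bb s2 s3))).
    rewrite !rCM rCV rCM; field.
    by rewrite /= ?conjC_eq0 B41 B23 l1n l2n l3n l4n.
  congr rC; rewrite (bb1 s1 s2) (bb1 s1 s4) (bbC s4 s3) b23 b34; field.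
  by rewrite x3 x4 x2 subr_eq0 t23.
- split => pos sep; apply: sep.
  + rewrite -(phi_t h1 h3 n31) -(phi_t h1 h2 n21) -(phi_t h1 h4 n41) -/t2 -/t3 -/t4.
    exact: arc_conn.
  + rewrite -(phi_t h1 h3 n31) -(phi_t h1 h2 n21) -(phi_t h1 h4 n41) -/t2 -/t3 -/t4.
    exact: arc_conn.
  + rewrite -(phi_t h1 h3 n31) -(phi_t h1 h2 n21) -(phi_t h1 h4 n41) -/t2 -/t3 -/t4.
    exact: arc_conn.
Qed.

End S13.


Section S14.
Variable R : realType.
Local Notation C := (R[i]).
Local Notation V := ('cV[R[i]]_3).

Lemma lift_std (x : V) : std_Rcircle_lift x ->
  exists (s : R * R) (l : C), S1 s /\ x = l *: std_param s.
Proof.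
move=> [[xr ->] [xn xx]].
set x0 := xr 0 0; set x1 := xr 1%:R 0; set x2 := xr 2%:R 0.
have hx : x0 * x2 + x1 * x1 + x2 * x0 = 0.
  apply: rC_inj; rewrite rC0 -xx /hform !mxE !rC_conj -!rCM -!rCD //.
have dn : x0 - 2 * x2 != 0.
  apply/eqP => d; move/negP: xn; apply; apply/eqP.
  have e2 : x2 = 0 by nra.
  have e1 : x1 = 0 by nra.
  have e0 : x0 = 0 by lra.
  by apply: eq3; rewrite !mxE -/x0 -/x1 -/x2 ?e0 ?e1 ?e2 rC0.
pose mu := 2 / (x0 - 2 * x2).
have mud : mu * (x0 - 2 * x2) = 2 by rewrite /mu divfK.
have mun : mu != 0 by apply/eqP => m0; move: mud; rewrite m0 mul0r => /eqP; rewrite eq_sym pnatr_eq0.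
exists (mu * x0 - 1, mu * x1), (rC mu)^-1; split.
  rewrite /S1 /=.
  have -> : (mu * x0 - 1) ^+ 2 + (mu * x1) ^+ 2 =
     mu * x0 * (mu * (x0 - 2 * x2) - 2) + mu ^+ 2 * (x0 * x2 + x1 * x1 + x2 * x0) + 1 by ring.
  by rewrite mud hx; ring.
have rmn : rC mu != 0 by rewrite -rC0; apply/eqP => /rC_inj /eqP; rewrite (negPf mun).
apply: (@scalerI _ _ (rC mu)) => //; rewrite scalerA mulfV // scale1r.
apply: eq3; rewrite !mxE /= -/x0 -/x1 -/x2 -rCM; congr rC; try ring.
have -> : mu * x2 = (mu * x0 - mu * (x0 - 2 * x2)) / 2 by field.
by rewrite mud; field.
Qed.

Lemma circle_std (p1 p2 p3 p4 : V) : on_common_Rcircle p1 p2 p3 p4 ->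
  exists (g : 'M[C]_3) (s1 s2 s3 s4 : R * R),
  [/\ isU21 g, [/\ S1 s1, S1 s2, S1 s3 & S1 s4] &
      [/\ same_point p1 (g *m std_param s1), same_point p2 (g *m std_param s2),
          same_point p3 (g *m std_param s3) & same_point p4 (g *m std_param s4)]].
Proof.
move=> [g [gU H]].
have K : forall p, p \in [:: p1; p2; p3; p4] ->
    exists s, S1 s /\ same_point p (g *m std_param s).
  move=> p /H [x [/lift_std [s [m [hs ->]]] [l ->]]].
  by exists s; split => //; exists (l * m); rewrite -scalemxAr scalerA.
have m1 : p1 \in [:: p1; p2; p3; p4] by rewrite !inE eqxx.
have m2 : p2 \in [:: p1; p2; p3; p4] by rewrite !inE eqxx !orbT.
have m3 : p3 \in [:: p1; p2; p3; p4] by rewrite !inE eqxx !orbT.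
have m4 : p4 \in [:: p1; p2; p3; p4] by rewrite !inE eqxx !orbT.
have [s1 [h1 e1]] := K p1 m1.
have [s2 [h2 e2]] := K p2 m2.
have [s3 [h3 e3]] := K p3 m3.
have [s4 [h4 e4]] := K p4 m4.
by exists g, s1, s2, s3, s4.
Qed.

End S14.


Section S15.
Variable R : realType.

Lemma betw (u v w : R) : (u - v) * (w - v) < 0 -> `|w - u| = `|w - v| + `|v - u|.
Proof.
move=> h.
have [uv|uv] := ltP u v.
  have wv : v < w by nra.
  rewrite !gtr0_norm; [ring| lra| lra| lra].
have uv' : v < u by rewrite lt_neqAle uv andbT; apply/eqP => e; subst; rewrite subrr mul0r in h; lra.
have wv : w < v by nra.
rewrite !ltr0_norm; [ring| lra| lra| lra].
Qed.

Lemma absW (a b : R) : b != 0 -> `|a / b| = `|a| / `|b|.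
Proof. by move=> bn; rewrite normrM normfV. Qed.

Lemma tcases (t2 t3 t4 : R) : t2 != t3 -> t2 != t4 -> t3 != t4 ->
  let x := `|(t4 - t2) / (t3 - t2)| in let y := `|(t4 - t3) / (t2 - t3)| in
  [/\ (t2 - t3) * (t4 - t3) < 0 -> x - y = 1,
      (t3 - t2) * (t4 - t2) < 0 -> y - x = 1 &
      (t2 - t4) * (t3 - t4) < 0 -> x + y = 1].
Proof.
move=> n23 n24 n34 x y.
have d32 : t3 - t2 != 0 by rewrite subr_eq0 eq_sym.
have d23 : t2 - t3 != 0 by rewrite subr_eq0.
have N32 : `|t3 - t2| != 0 by rewrite normr_eq0.
have E : `|t2 - t3| = `|t3 - t2| by rewrite distrC.
rewrite /x /y !absW // E.
split => h.
- rewrite (betw h); field; exact: N32.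
- rewrite (betw h) (distrC t2 t3); field; exact: N32.
- have H := betw h.
  rewrite -mulrDl (distrC t4 t3) [X in X / _]addrC -H mulfV //.
Qed.

Lemma tsome (t2 t3 t4 : R) : t2 != t3 -> t2 != t4 -> t3 != t4 ->
  [\/ (t2 - t3) * (t4 - t3) < 0, (t3 - t2) * (t4 - t2) < 0 | (t2 - t4) * (t3 - t4) < 0].
Proof.
move=> n23 n24 n34.
have [a|a] := ltP ((t2 - t3) * (t4 - t3)) 0; first by constructor 1.
have [b|b] := ltP ((t3 - t2) * (t4 - t2)) 0; first by constructor 2.
have [c|c] := ltP ((t2 - t4) * (t3 - t4)) 0; first by constructor 3.
exfalso.
have p1 : 0 < (t2 - t3) ^+ 2 by rewrite exprn_even_gt0 // subr_eq0.
have p2 : 0 < (t2 - t4) ^+ 2 by rewrite exprn_even_gt0 // subr_eq0.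
have p3 : 0 < (t3 - t4) ^+ 2 by rewrite exprn_even_gt0 // subr_eq0.
have : ((t2 - t3) * (t4 - t3)) * ((t3 - t2) * (t4 - t2)) * ((t2 - t4) * (t3 - t4)) =
   - ((t2 - t3) ^+ 2 * (t2 - t4) ^+ 2 * (t3 - t4) ^+ 2) by ring.
have : 0 <= ((t2 - t3) * (t4 - t3)) * ((t3 - t2) * (t4 - t2)) * ((t2 - t4) * (t3 - t4)).
  by apply: mulr_ge0 => //; apply: mulr_ge0.
have : 0 < (t2 - t3) ^+ 2 * (t2 - t4) ^+ 2 * (t3 - t4) ^+ 2 by apply: mulr_gt0 => //; apply: mulr_gt0.
move=> q r s; rewrite s in r; lra.
Qed.

End S15.


Section S16.
Variable R : realType.
Local Notation C := (R[i]).
Local Notation V := ('cV[R[i]]_3).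

Lemma Nsym (p q : V) : N (hform q p) = N (hform p q).
Proof. by rewrite hformC Nconj. Qed.

Lemma sqX' (w : R) : sqrtC (rC (w ^+ 2)) = rC `|w|.
Proof. by rewrite sqrtC_rC ?sqr_ge0 // sqrtr_sqr. Qed.

Lemma sqX (X : C) (w : R) : X = rC (w ^+ 2) -> sqrtC `|X| = rC `|w|.
Proof. by move=> ->; rewrite norm_rC ger0_norm ?sqr_ge0 // sqX'. Qed.

Lemma Npos (z : C) : z != 0 -> 0 < N z.
Proof. by move=> z0; rewrite lt0r N_ge0 N_eq0 z0. Qed.

End S16.

Theorem theorem3p1 (R : realType) (p1 p2 p3 p4 : 'cV[R[i]]_3) :
  boundary_lift p1 -> boundary_lift p2 -> boundary_lift p3 -> boundary_lift p4 ->
  ~ same_point p1 p2 -> ~ same_point p1 p3 -> ~ same_point p1 p4 ->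
  ~ same_point p2 p3 -> ~ same_point p2 p4 -> ~ same_point p3 p4 ->
  let X1 := KRX p1 p2 p3 p4 in
  let X2 := KRX p1 p3 p2 p4 in
  [/\ 1 <= sqrtC `|X1| + sqrtC `|X2|,
      -1 <= sqrtC `|X1| - sqrtC `|X2| <= 1,
      (sqrtC `|X1| + sqrtC `|X2| = 1 \/ sqrtC `|X1| - sqrtC `|X2| = -1
         \/ sqrtC `|X1| - sqrtC `|X2| = 1) <-> on_common_Rcircle p1 p2 p3 p4
    & on_common_Rcircle p1 p2 p3 p4 ->
      [/\ 0 < X1, 0 < X2 &
        forall (g : 'M[R[i]]_3) (s1 s2 s3 s4 : R * R),
          isU21 g -> S1 s1 -> S1 s2 -> S1 s3 -> S1 s4 ->
          same_point p1 (g *m std_param s1) -> same_point p2 (g *m std_param s2) ->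
          same_point p3 (g *m std_param s3) -> same_point p4 (g *m std_param s4) ->
          [/\ separates s1 s3 s2 s4 -> sqrtC X1 - sqrtC X2 = 1,
              separates s1 s2 s3 s4 -> sqrtC X2 - sqrtC X1 = 1 &
              separates s1 s4 s2 s3 -> sqrtC X1 + sqrtC X2 = 1]]].
Proof.
move=> b1 b2 b3 b4 d12 d13 d14 d23 d24 d34 X1 X2.
have anz : forall p q : 'cV[R[i]]_3, boundary_lift p -> boundary_lift q ->
    ~ same_point p q -> hform p q != 0.
  by move=> p q bp bq nsp; apply/eqP => h; apply: nsp; exact: null_orth.
have n12 := anz _ _ b1 b2 d12; have n13 := anz _ _ b1 b3 d13.
have n14 := anz _ _ b1 b4 d14; have n23 := anz _ _ b2 b3 d23.
have n24 := anz _ _ b2 b4 d24; have n34 := anz _ _ b3 b4 d34.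
case: (b1) => _ h1; case: (b2) => _ h2; case: (b3) => _ h3; case: (b4) => _ h4.
have R4 := rel4 h1 h2 h3 h4; cbv zeta in R4.
pose A := N (hform p1 p2) * N (hform p3 p4).
pose B := N (hform p1 p3) * N (hform p2 p4).
pose D := N (hform p1 p4) * N (hform p2 p3).
pose c1 := hform p1 p2 * hform p2 p3 * hform p3 p4 * (hform p1 p4)^*.
pose c2 := hform p1 p3 * (hform p2 p3)^* * hform p2 p4 * (hform p1 p4)^*.
pose c3 := hform p1 p2 * hform p2 p4 * (hform p3 p4)^* * (hform p1 p3)^*.
rewrite -/A -/B -/D -/c1 -/c2 -/c3 in R4.
have A0 : 0 < A by apply: mulr_gt0; apply: Npos.
have B0 : 0 < B by apply: mulr_gt0; apply: Npos.
have D0 : 0 < D by apply: mulr_gt0; apply: Npos.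
have Nc1 : N c1 = A * D by rewrite /c1 /A /D !NM Nconj; ring.
have Nc2 : N c2 = B * D by rewrite /c2 /B /D !NM !Nconj; ring.
have Nc3 : N c3 = A * B by rewrite /c3 /A /B !NM !Nconj; ring.
have r1 := Re_le_N c1; have r2 := Re_le_N c2; have r3 := Re_le_N c3.
have Hle : A^+2 + B^+2 + D^+2 <= 2 * (A * B + B * D + D * A).
  rewrite R4; rewrite Nc1 Nc2 Nc3 in r1 r2 r3; nra.
have PT := real_ptolemy A0 B0 D0 Hle; cbv zeta in PT; case: PT => I1 I2 Iff.
have sX1 : sqrtC `|X1| = rC (Num.sqrt (B / D)).
  rewrite normE sqrtC_rC ?N_ge0 //; congr (rC (Num.sqrt _)).
  rewrite /X1 /KRX NM NV !NM (Nsym p1 p3) (Nsym p2 p4) (Nsym p1 p4) (Nsym p2 p3).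
  by rewrite /B /D invfM; ring.
have sX2 : sqrtC `|X2| = rC (Num.sqrt (A / D)).
  rewrite normE sqrtC_rC ?N_ge0 //; congr (rC (Num.sqrt _)).
  rewrite /X2 /KRX NM NV !NM (Nsym p1 p2) (Nsym p3 p4) (Nsym p1 p4).
  by rewrite /A /D invfM; ring.
rewrite sX1 sX2.
split.
- by rewrite -rCD -rC1 rC_le.
- by rewrite -rCB -rC1 -rCN !rC_le.
- split.
  + move=> H.
    have HR : A^+2 + B^+2 + D^+2 = 2 * (A * B + B * D + D * A).
      apply/Iff; case: H => [e|[e|e]]; [left|right; left|right; right];
        apply: rC_inj; rewrite ?rCD ?rCB ?rCN ?rC1 //.
    rewrite R4 in HR; rewrite Nc1 Nc2 Nc3 in r1 r2 r3.
    have e1 : complex.Re c1 = N c1 by rewrite Nc1; nra.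
    have e2 : complex.Re c2 = N c2 by rewrite Nc2; nra.
    have e3 : complex.Re c3 = N c3 by rewrite Nc3; nra.
    exact: (construct b1 b2 b3 b4 n12 n13 n14 n23 n24 n34 (Re_eq_N e1) (Re_eq_N e2) (Re_eq_N e3)).
  + move=> circ.
    have [g [s1 [s2 [s3 [s4 [gU [h1' h2' h3' h4'] [e1 e2 e3 e4]]]]]]] := circle_std circ.
    have [t2 [t3 [t4 [tn K1 K2 _]]]] :=
      CL b1 b2 b3 b4 d12 d13 d14 d23 d24 d34 gU h1' h2' h3' h4' e1 e2 e3 e4.
    case/and3P: tn => t23 t24 t34.
    rewrite -sX1 -sX2 (sqX K1) (sqX K2).
    have [T1 T2 T3] := tcases t23 t24 t34.
    case: (tsome t23 t24 t34) => h.
    * by right; right; rewrite -rCB (T1 h) rC1.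
    * by right; left; rewrite -rCB -(opprB) (T2 h) rCN rC1.
    * by left; rewrite -rCD (T3 h) rC1.
- move=> circ.
  have [g [s1 [s2 [s3 [s4 [gU [h1' h2' h3' h4'] [e1 e2 e3 e4]]]]]]] := circle_std circ.
  have [t2 [t3 [t4 [tn K1 K2 _]]]] :=
    CL b1 b2 b3 b4 d12 d13 d14 d23 d24 d34 gU h1' h2' h3' h4' e1 e2 e3 e4.
  case/and3P: tn => t23 t24 t34.
  split.
  + rewrite /X1 K1 -rC0 rC_lt exprn_even_gt0 //.
    by rewrite mulf_neq0 ?invr_eq0 // subr_eq0 // eq_sym.
  + rewrite /X2 K2 -rC0 rC_lt exprn_even_gt0 //.
    by rewrite mulf_neq0 ?invr_eq0 // subr_eq0 // eq_sym.
  move=> g' s1' s2' s3' s4' gU' k1 k2 k3 k4 f1 f2 f3 f4.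
  have [u2 [u3 [u4 [tn' L1 L2 [S1' S2' S3']]]]] :=
    CL b1 b2 b3 b4 d12 d13 d14 d23 d24 d34 gU' k1 k2 k3 k4 f1 f2 f3 f4.
  case/and3P: tn' => u23 u24 u34.
  have [T1 T2 T3] := tcases u23 u24 u34.
  rewrite /X1 /X2 L1 L2 !sqX'.
  have neg : forall P : R, P != 0 -> ~ (0 < P) -> P < 0.
    by move=> P Pn nP; rewrite lt_neqAle Pn /=; rewrite leNgt; apply/negP.
  split => sep.
  + rewrite -rCB (T1 _) ?rC1 //; apply: neg; last by move=> h; exact: (S1' h).
    by rewrite mulf_neq0 // subr_eq0 // eq_sym.
  + rewrite -rCB (T2 _) ?rC1 //; apply: neg; last by move=> h; exact: (S2' h).
    by rewrite mulf_neq0 // subr_eq0 // eq_sym.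
  + rewrite -rCD (T3 _) ?rC1 //; apply: neg; last by move=> h; exact: (S3' h).
    by rewrite mulf_neq0 // subr_eq0.
Qed.
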